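(* Let $\Omega\subset\mathbb{R}^n$ be a nonempty closed convex set and $f:\mathbb{R}^n\to\mathbb{R}$ differentiable over $\Omega$ such that (i) $f(\bm{x})\ge\underline{f}$ for all $\bm{x}\in\Omega$, (ii) $\|\nabla f(\bm{x})-\nabla f(\bm{y})\|_2\le L\|\bm{x}-\bm{y}\|_2$ for all $\bm{x},\bm{y}\in\Omega$ for some $L>0$, and (iii) the relaxation sequence $\{\omega_k\}\subset[0,\infty)$ satisfies $\sum_{k=0}^\infty\omega_k<\infty$. Suppose $\{\bm{x}_k\}$ is generated by either IGPM without line search or IGPM with line search (described in the context). Then \[\lim_{k\to\infty}E(\bm{x}_k;\beta)=0,\qquad\text{where } E(\bm{x};\beta):=\|\bm{x}-\mathcal{P}_\Omega(\bm{x}-\beta\nabla f(\bm{x}))\|_2^2 .\]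
   Context: $\mathcal{P}_\Omega$ is Euclidean projection onto $\Omega$. For $\bm{x}_k\in\Omega$ write $\bm{g}_k=\nabla f(\bm{x}_k)$, $\bm{v}_k=\bm{x}_k-\beta\bm{g}_k$ for a fixed $\beta>0$, and define $p(\bm{z};\bm{x}_k)=\tfrac12\|\bm{z}-\bm{v}_k\|_2^2+\delta_\Omega(\bm{z})$ ($\delta_\Omega$ the $0/+\infty$ indicator of $\Omega$), $\Delta p(\bm{z};\bm{x}_k)=p(\bm{x}_k;\bm{x}_k)-p(\bm{z};\bm{x}_k)$, and $q(\bm{u};\bm{x}_k)=-\tfrac12\|\bm{u}-\bm{v}_k\|_2^2-\delta_\Omega^*(\bm{u})+\tfrac12\|\bm{v}_k\|_2^2$ with $\delta^*_\Omega(\bm{u})=\sup_{\bm{x}\in\Omega}\langle\bm{x},\bm{u}\rangle$. An inexact projection at iteration $k$ is a point $\bm{z}_k\in\Omega$ with $\Delta p(\bm{z}_k;\bm{x}_k)\ge0$ together with some dual point $\bm{u}_k$ such that $\frac{p(\bm{x}_k;\bm{x}_k)-p(\bm{z}_k;\bm{x}_k)+\omega_k}{p(\bm{x}_k;\bm{x}_k)-q(\bm{u}_k;\bm{x}_k)+\omega_k}\ge\gamma$, where $0<\gamma<1$. IGPM without line search: $0<\beta\le1/L$, $\bm{x}_0\in\Omega$, and $\bm{x}_{k+1}=\bm{z}_k$ for all $k$. IGPM with line search: fix $0<\eta<1$, $0<\alpha\le1$, $\beta>0$, $0<\theta<1$, $\bm{x}_0\in\Omega$; set $\bm{d}_k=\bm{z}_k-\bm{x}_k$,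 let $\alpha_k$ be the largest value in $\{\theta^i\alpha: i=0,1,2,\dots\}$ with $f(\bm{x}_k+\alpha_k\bm{d}_k)\le f(\bm{x}_k)+\eta\alpha_k\bm{g}_k^T\bm{d}_k$, and set $\bm{x}_{k+1}=\bm{x}_k+\alpha_k\bm{d}_k$. The algorithms are considered as generating infinite sequences. *)

(* Defs.v *)
From HB Require Import structures.
From mathcomp Require Import all_boot all_order all_algebra.
From mathcomp Require Import all_classical all_reals all_analysis.
Set Implicit Arguments. Unset Strict Implicit. Unset Printing Implicit Defensive.
Import Order.TTheory GRing.Theory Num.Theory.
Import numFieldNormedType.Exports.
Local Open Scope classical_set_scope.
Local Open Scope ring_scope.

Section IGPM.
Variables (R : realType) (n : nat).
Notation vec := 'rV[R]_n.

Definition dot (u v : vec) : R := \sum_(i < n) u ord0 i * v ord0 i.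
Definition norm2 (u : vec) : R := Num.sqrt (dot u u).

Definition is_proj (Om : set vec) (v p : vec) : Prop :=
  Om p /\ forall z, Om z -> norm2 (p - v) <= norm2 (z - v).

(* P_Om(v): the (unique, for nonempty closed convex Om) nearest point *)
Definition proj (Om : set vec) (v : vec) : vec := xget 0 [set p | is_proj Om v p].

(* E(x; beta) = || x - P_Om(x - beta grad f(x)) ||_2^2, grad f given by g *)
Definition Eres (Om : set vec) (g : vec -> vec) (beta : R) (x : vec) : R :=
  norm2 (x - proj Om (x - beta *: g x)) ^+ 2.

(* p(z; x_k) = 1/2 ||z - v_k||^2 + delta_Om(z), v_k = x_k - beta g_k *)
Definition pfun (Om : set vec) (g : vec -> vec) (beta : R) (xk z : vec) : \bar R :=
  if `[< Om z >] then ((2^-1) * norm2 (z - (xk - beta *: g xk)) ^+ 2)%:E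
  else +oo%E.

Definition supp (Om : set vec) (u : vec) : \bar R :=
  ereal_sup [set (dot x u)%:E | x in Om].

Definition qfun (Om : set vec) (g : vec -> vec) (beta : R) (xk u : vec) : \bar R :=
  let v := xk - beta *: g xk in
  ((- (2^-1 * norm2 (u - v) ^+ 2))%:E - supp Om u + (2^-1 * norm2 v ^+ 2)%:E)%E.

(* inexact projection condition at iteration k (ratio condition written
   multiplicatively) *)
Definition inexact_proj (Om : set vec) (g : vec -> vec) (beta gamma om : R)
    (xk zk uk : vec) : Prop :=
  Om zk /\
  (0 <= pfun Om g beta xk xk - pfun Om g beta xk zk)%E /\
  (gamma%:E * (pfun Om g beta xk xk - qfun Om g beta xk uk + om%:E)
     <= pfun Om g beta xk xk - pfun Om g beta xk zk + om%:E)%E.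

Definition IGPM_noLS (Om : set vec) (g : vec -> vec) (L beta gamma : R)
    (om : nat -> R) (x z u : nat -> vec) : Prop :=
  0 < beta <= L^-1 /\ Om (x 0%N) /\
  forall k, inexact_proj Om g beta gamma (om k) (x k) (z k) (u k) /\
            x k.+1 = z k.

Definition armijo (f : vec -> R) (g : vec -> vec) (eta : R) (xk dk : vec) (a : R) :=
  f (xk + a *: dk) <= f xk + eta * a * dot (g xk) dk.

Definition IGPM_LS (Om : set vec) (f : vec -> R) (g : vec -> vec)
    (eta alpha beta theta gamma : R)
    (om : nat -> R) (x z u : nat -> vec) : Prop :=
  0 < eta < 1 /\ 0 < alpha <= 1 /\ 0 < beta /\ 0 < theta < 1 /\ Om (x 0%N) /\
  forall k, inexact_proj Om g beta gamma (om k) (x k) (z k) (u k) /\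
    exists i : nat,
      armijo f g eta (x k) (z k - x k) (theta ^+ i * alpha) /\
      (forall j : nat, (j < i)%N -> ~ armijo f g eta (x k) (z k - x k) (theta ^+ j * alpha)) /\
      x k.+1 = x k + (theta ^+ i * alpha) *: (z k - x k).

End IGPM.

(* Main.v *)
Require Import Defs.
From HB Require Import structures.
From mathcomp Require Import all_boot all_order all_algebra.
From mathcomp Require Import all_classical all_reals all_analysis.
From mathcomp Require Import ring lra.
Import Order.TTheory GRing.Theory Num.Theory.
Import numFieldNormedType.Exports.
Local Open Scope classical_set_scope.
Local Open Scope ring_scope.

Section Aux.
Variables (R : realType) (n : nat).
Notation vec := 'rV[R]_n.
Implicit Types (u v w : vec).

Lemma dotC u v : dot u v = dot v u.
Proof. by apply: eq_bigr => i _; rewrite mulrC. Qed.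
Lemma dotDl u v w : dot (u + v) w = dot u w + dot v w.
Proof. by rewrite /dot -big_split; apply: eq_bigr => i _; rewrite mxE mulrDl. Qed.
Lemma dotZl (a : R) u w : dot (a *: u) w = a * dot u w.
Proof. by rewrite /dot mulr_sumr; apply: eq_bigr => i _; rewrite mxE mulrA. Qed.
Lemma dotNl u w : dot (- u) w = - dot u w.
Proof. by rewrite -scaleN1r dotZl mulN1r. Qed.
Lemma dotBl u v w : dot (u - v) w = dot u w - dot v w.
Proof. by rewrite dotDl dotNl. Qed.
Lemma dotDr u v w : dot w (u + v) = dot w u + dot w v.
Proof. by rewrite dotC dotDl !(dotC w). Qed.
Lemma dotZr (a : R) u w : dot w (a *: u) = a * dot w u.
Proof. by rewrite dotC dotZl dotC. Qed.
Lemma dotNr u w : dot w (- u) = - dot w u.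
Proof. by rewrite dotC dotNl dotC. Qed.
Lemma dotBr u v w : dot w (u - v) = dot w u - dot w v.
Proof. by rewrite dotDr dotNr. Qed.
Lemma dot_ge0 u : 0 <= dot u u.
Proof. by apply: sumr_ge0 => i _; rewrite -expr2 sqr_ge0. Qed.
Lemma norm2_sq u : norm2 u ^+ 2 = dot u u.
Proof. by rewrite /norm2 sqr_sqrtr // dot_ge0. Qed.
Lemma norm2_ge0 u : 0 <= norm2 u.
Proof. exact: sqrtr_ge0. Qed.
Lemma coord_le u (i : 'I_n) : u ord0 i ^+ 2 <= dot u u.
Proof.
rewrite /dot (bigD1 i) //= -expr2 lerDl; apply: sumr_ge0 => j _.
by rewrite -expr2 sqr_ge0.
Qed.

Lemma amgm (s : R) w d : 0 < s -> 2 * dot w d <= s * dot w w + s^-1 * dot d d.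
Proof.
move=> s0.
have := dot_ge0 (s *: w - d).
rewrite !(dotBl, dotBr, dotZl, dotZr) (dotC d w) => h.
rewrite -(ler_pM2l s0) mulrDr mulrA [s * (s^-1 * _)]mulrA mulfV ?gt_eqF // mul1r.
nra.
Qed.

Lemma tail0 (h : nat -> R) (M : R) : (forall k, 0 <= h k) ->
  (forall N, \sum_(0 <= k < N) h k <= M) -> h @ \oo --> 0.
Proof.
move=> h0 hM; apply: cvg_series_cvg_0; apply: nondecreasing_is_cvgn.
  by apply: nondecreasing_series => k _ _; exact: h0.
by exists M => _ [N _ <-]; exact: hM.
Qed.


Lemma conv_in (Om : set vec) a b (t : R) : convex_set Om -> Om a -> Om b ->
  0 <= t -> t <= 1 -> Om (a + t *: (b - a)).
Proof.
move=> cO Oa Ob t0 t1.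
have := cO b a (Itv01 t0 t1) (mem_set Ob) (mem_set Oa).
rewrite inE.
have -> : conv (Itv01 t0 t1) (b : convex_lmodType vec) a = a + t *: (b - a).
  rewrite /conv /=.
  by rewrite /unstable.onem scalerBl scale1r scalerBr addrCA.
done.
Qed.

Lemma proj_ex (Om : set vec) v : Om !=set0 -> closed Om ->
  exists p, is_proj Om v p.
Proof.
move=> [y0 Oy0] clO.
pose F := fun z : vec => dot (z - v) (z - v).
pose r := Num.sqrt (F y0).
pose B := [set z : vec | forall i, `[v ord0 i - r, v ord0 i + r]%classic (z ord0 i)].
have FB z : F z <= F y0 -> B z.
  move=> hz i /=; rewrite in_itv /= -ler_distl.
  rewrite -sqrtr_sqr /r ler_wsqrtr //; apply: le_trans hz.
  by have := coord_le (z - v) i; rewrite !mxE.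
have cB : compact B.
  by apply: (@rV_compact _ _ (fun i => `[v ord0 i - r, v ord0 i + r]%classic)) => i;
    exact: segment_compact.
have cA : compact (B `&` Om) by exact: compact_closedI.
have A0 : (B `&` Om) !=set0 by exists y0; split => //; exact: FB.
have Ci : forall i, continuous (fun z : vec => (z - v) ord0 i).
  move=> i z.
  have -> : (fun z : vec => (z - v) ord0 i) = (fun z : vec => z ord0 i) - cst (v ord0 i).
    by apply: funext => w; rewrite !mxE.
  apply: continuousB; first exact: coord_continuous.
  exact: cst_continuous.
have Fc : continuous F.
  rewrite /F /dot.
  apply: continuous_big => //; first exact: add_continuous.
  move=> i _ w.
  have -> : (fun z : vec => (z - v) ord0 i * (z - v) ord0 i) = (fun z : vec => (z - v) ord0 i) * (fun z : vec => (z - v) ord0 i) by [].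
  by apply: continuousM; exact: Ci.
have [p] := EVT_min_rV A0 cA (continuous_subspaceT Fc).
rewrite inE => -[Bp Op] pmin.
exists p; split => // w Ow.
rewrite /norm2 ler_wsqrtr //.
have py0 : F p <= F y0 by apply: pmin; rewrite inE; split => //; exact: FB.
have [hw|hw] := leP (F w) (F y0).
  by apply: pmin; rewrite inE; split => //; exact: FB.
exact: le_trans py0 (ltW hw).
Qed.

Lemma projP (Om : set vec) v : Om !=set0 -> closed Om -> is_proj Om v (Defs.proj Om v).
Proof. by move=> O0 clO; apply: xgetPex; exact: proj_ex. Qed.

Lemma dot_le_of_norm2 (a b : vec) : norm2 a <= norm2 b -> dot a a <= dot b b.
Proof. by rewrite /norm2 ler_sqrt // dot_ge0. Qed.

Lemma proj_key (Om : set vec) v p y : convex_set Om -> is_proj Om v p -> Om y ->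
  dot (y - p) (y - p) <= dot (y - v) (y - v) - dot (p - v) (p - v).
Proof.
move=> cO [Op pmin] Oy.
pose a := dot (p - v) (y - p); pose b := dot (y - p) (y - p).
have b0 : 0 <= b by exact: dot_ge0.
have H t : 0 <= t -> t <= 1 -> 0 <= 2 * t * a + t ^+ 2 * b.
  move=> t0 t1.
  have := dot_le_of_norm2 _ _ (pmin _ (@conv_in Om p y t cO Op Oy t0 t1)).
  have -> : p + t *: (y - p) - v = (p - v) + t *: (y - p).
    by rewrite addrAC.
  rewrite /a /b; move: (p - v) (y - p) => P D.
  rewrite !(dotDl, dotDr, dotZl, dotZr) (dotC D P).
  move=> h; nra.
have a0 : 0 <= a.
  rewrite leNgt; apply/negP => a0.
  have ba : 0 < b - a by lra.
  pose t := - a / (b - a).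
  have t0 : 0 < t by rewrite /t divr_gt0 // oppr_gt0.
  have t1 : t <= 1 by rewrite /t ler_pdivrMr // mul1r; lra.
  have := H t (ltW t0) t1.
  have tE : t * (b - a) = - a by rewrite /t mulrVK ?unitfE ?gt_eqF.
  nra.
have -> : y - v = (y - p) + (p - v) by rewrite addrA subrK.
move: a0; rewrite /a; move: (p - v) (y - p) => P D a0.
rewrite !(dotDl, dotDr) (dotC D P).
lra.
Qed.


Lemma dphi (f : vec -> R) (g : vec -> vec) (x d : vec) (t : R) :
  differentiable f (x + t *: d) -> (forall w, 'd f (x + t *: d) w = dot (g (x + t *: d)) w) ->
  is_derive t 1 (fun s : R => f (x + s *: d)) (dot (g (x + t *: d)) d).
Proof.
move=> df dg.
have E : (fun h : R => h^-1 *: (((fun s : R => f (x + s *: d)) \o shift t) (h *: 1) - f (x + t *: d)))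
  = (fun h : R => h^-1 *: ((f \o shift (x + t *: d)) (h *: d) - f (x + t *: d))).
  apply: funext => h /=.
  by rewrite [_%:A]mulr1 scalerDl addrCA.
apply: DeriveDef.
  by rewrite /derivable E; exact: diff_derivable.
rewrite /derive E -dg -deriveE //.
Qed.


Lemma lip_sq (L : R) (a b : vec) : 0 < L -> norm2 a <= L * norm2 b -> dot a a <= L ^+ 2 * dot b b.
Proof.
move=> L0 h; rewrite -!norm2_sq.
have := norm2_ge0 a; have := norm2_ge0 b; nra.
Qed.

Lemma descent (Om : set vec) (f : vec -> R) (g : vec -> vec) (L : R) (x y : vec) :
  convex_set Om ->
  (forall y, Om y -> differentiable f y /\ forall v, 'd f y v = dot (g y) v) ->
  (forall y y', Om y -> Om y' -> norm2 (g y - g y') <= L * norm2 (y - y')) ->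
  0 < L -> Om x -> Om y ->
  f y <= f x + dot (g x) (y - x) + L / 2 * dot (y - x) (y - x).
Proof.
move=> cO Hd Hl L0 Ox Oy.
set d := y - x.
have Ot t : 0 <= t -> t <= 1 -> Om (x + t *: d) by move=> t0 t1; exact: conv_in.
pose c1 := dot (g x) d; pose c2 := L / 2 * dot d d.
pose psi : R -> R := (fun s : R => f (x + s *: d)) - c1 \*: (@id R) - c2 \*: ((@id R : R -> R) ^+ 2).
pose dpsi := fun t : R => dot (g (x + t *: d)) d - c1 - 2 * c2 * t.
have sE (a b : R) : a *: b = a * b by [].
have Dpsi (t : R) : 0 <= t -> t <= 1 -> is_derive t 1 psi (dpsi t).
  move=> t0 t1; have [df dg] := Hd _ (Ot t t0 t1).
  rewrite /psi; apply: is_derive_eq.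
    apply: is_deriveB; apply: is_deriveB; first exact: dphi.
  by rewrite /dpsi /= !sE !mulr1 expr1; ring.
have H1 : forall s : R, s \in `]0, 1[ -> is_derive s 1 psi (dpsi s).
  by move=> s; rewrite in_itv /= => /andP[s0 s1]; apply: Dpsi; exact: ltW.
have H2 : {within `[0, 1], continuous psi}.
  apply: derivable_within_continuous => s; rewrite in_itv /= => /andP[s0 s1].
  by have := Dpsi s s0 s1 => -[].
have [c] := @MVT R psi dpsi 0 1 ltr01 H1 H2.
rewrite in_itv /= => /andP[c0 c1'].
have psiE (s : R) : psi s = f (x + s *: d) - c1 * s - c2 * (s ^+ 2) by [].
have P1 : psi 1 = f y - c1 - c2.
  rewrite psiE; have -> : x + 1 *: d = y by rewrite scale1r /d addrC subrK.
  by rewrite mulr1 expr1n mulr1.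
have P0 : psi 0 = f x.
  by rewrite psiE scale0r addr0 mulr0 expr0n /= mulr0 !subr0.
move=> E.
have : dpsi c <= 0.
  rewrite /dpsi /c2.
  have Oc := Ot c (ltW c0) (ltW c1').
  have h1 := lip_sq L _ _ L0 (Hl _ _ Oc Ox).
  rewrite (_ : x + c *: d - x = c *: d) in h1; last by rewrite addrC addKr.
  rewrite dotZl dotZr in h1.
  have Lc : 0 < L * c by rewrite mulr_gt0.
  have := amgm (L * c)^-1 (g (x + c *: d) - g x) d; rewrite invr_gt0 invrK => /(_ Lc).
  rewrite dotBl -/c1.
  set W := dot _ _ in h1 *.
  have sLc : (L * c)^-1 * (L * c) = 1 by rewrite mulVf ?gt_eqF.
  have iLc : 0 < (L * c)^-1 by rewrite invr_gt0.
  have : (L * c)^-1 * W <= (L * c)^-1 * (L ^+ 2 * (c * (c * dot d d))) by rewrite ler_pM2l.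
  have -> : (L * c)^-1 * (L ^+ 2 * (c * (c * dot d d))) = (L * c) * dot d d.
    rewrite -[in RHS](mul1r (L * c)) -sLc; ring.
  move=> h2 h3; lra.
move=> h; rewrite P1 P0 subr0 mulr1 /c2 /c1 in E; lra.
Qed.



Lemma pfun_in (Om : set vec) g beta xk z : Om z ->
  pfun Om g beta xk z = (2^-1 * dot (z - (xk - beta *: g xk)) (z - (xk - beta *: g xk)))%:E.
Proof. by move=> Oz; rewrite /pfun asboolT // norm2_sq. Qed.

Lemma weak_dual (Om : set vec) g beta xk u z : Om z ->
  (qfun Om g beta xk u <= pfun Om g beta xk z)%E.
Proof.
move=> Oz; rewrite pfun_in // /qfun.
set v := xk - beta *: g xk.
have hs : ((dot z u)%:E <= supp Om u)%E by apply: ereal_sup_ubound; exists z.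
case: (supp Om u) hs => [r| |] //= hs.
  rewrite -!EFinD lee_fin.
  rewrite lee_fin in hs.
  rewrite !norm2_sq.
  have := dot_ge0 (z + u - v).
  rewrite /v; move: (xk - beta *: g xk) => w.
  rewrite !(dotDl, dotDr, dotNl, dotNr) ?(dotC u z) ?(dotC w z) ?(dotC w u).
  move=> h; lra.
by rewrite leNye.
Qed.


Lemma step_bound (Om : set vec) g beta gamma om xk zk uk :
  Om !=set0 -> closed Om -> convex_set Om -> 0 < gamma -> 0 <= om -> Om xk ->
  inexact_proj Om g beta gamma om xk zk uk ->
  0 <= 2^-1 * dot (xk - (xk - beta *: g xk)) (xk - (xk - beta *: g xk))
       - 2^-1 * dot (zk - (xk - beta *: g xk)) (zk - (xk - beta *: g xk)) /\
  Eres Om g beta xk <= 2 / gamma *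
    (2^-1 * dot (xk - (xk - beta *: g xk)) (xk - (xk - beta *: g xk))
       - 2^-1 * dot (zk - (xk - beta *: g xk)) (zk - (xk - beta *: g xk)) + om).
Proof.
move=> O0 clO cO g0 om0 Oxk [Ozk [hD hq]].
rewrite !pfun_in // in hD hq.
rewrite /Eres.
have pp := projP Om (xk - beta *: g xk) O0 clO.
have hw := weak_dual Om g beta xk uk _ pp.1.
rewrite pfun_in in hw; last exact: pp.1.
have key := proj_key _ _ _ _ cO pp Oxk.
move: hD hq hw key.
move: (Defs.proj Om (xk - beta *: g xk)) => p.
move: (xk - beta *: g xk) => v.
rewrite norm2_sq.
case: (qfun Om g beta xk uk) => [r| |] hD hq hw key.
- rewrite -?EFinB -?EFinD -?EFinM !lee_fin in hD hq hw *.
  split => //.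
  rewrite mulrAC ler_pdivlMr //.
  nra.
- by rewrite leye_eq in hw.
- move: hq => /=; rewrite addey // addye // mulry gtr0_sg // mul1e -!EFinD leye_eq.
  by [].
Qed.


Definition Dl (g : vec -> vec) (beta : R) (xk zk : vec) :=
  2^-1 * dot (xk - (xk - beta *: g xk)) (xk - (xk - beta *: g xk))
  - 2^-1 * dot (zk - (xk - beta *: g xk)) (zk - (xk - beta *: g xk)).

Lemma Dl_eq g beta xk zk :
  Dl g beta xk zk = - 2^-1 * dot (zk - xk) (zk - xk) - beta * dot (g xk) (zk - xk).
Proof.
rewrite /Dl.
have -> : xk - (xk - beta *: g xk) = beta *: g xk by rewrite opprB addrC subrK.
have -> : zk - (xk - beta *: g xk) = (zk - xk) + beta *: g xk by rewrite opprB addrA addrAC.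
move: (zk - xk) => d.
rewrite !(dotDl, dotDr, dotZl, dotZr) (dotC d (g xk)); move: (dot d d) (dot (g xk) d) (dot (g xk) (g xk)) => a b c; lra.
Qed.

Lemma dec_noLS (Om : set vec) f g L beta xk zk :
  convex_set Om ->
  (forall y, Om y -> differentiable f y /\ forall v, 'd f y v = dot (g y) v) ->
  (forall y y', Om y -> Om y' -> norm2 (g y - g y') <= L * norm2 (y - y')) ->
  0 < L -> 0 < beta -> beta <= L^-1 -> Om xk -> Om zk -> 0 <= Dl g beta xk zk ->
  Dl g beta xk zk * beta^-1 <= f xk - f zk.
Proof.
move=> cO Hd Hl L0 b0 bL Ox Oz D0.
have h := descent _ _ _ _ _ _ cO Hd Hl L0 Ox Oz.
move: D0; rewrite Dl_eq => D0.
have dd0 := dot_ge0 (zk - xk).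
move: h D0 dd0; move: (dot (zk - xk) (zk - xk)) (dot (g xk) (zk - xk)) => dd gd h D0 dd0.
have ib : beta * beta^-1 = 1 by rewrite mulfV ?gt_eqF.
have iL : L * beta <= 1 by rewrite -(mulfV (lt0r_neq0 L0)) ler_pM2l.
have ib0 : 0 < beta^-1 by rewrite invr_gt0.
rewrite ler_pdivrMr //.
have := ler_wpM2l (ltW b0) h.
have := mulr_ge0 (ltW L0) dd0.
nra.
Qed.


Lemma dec_LS (Om : set vec) f g L eta alpha beta theta xk zk (i : nat) :
  convex_set Om ->
  (forall y, Om y -> differentiable f y /\ forall v, 'd f y v = dot (g y) v) ->
  (forall y y', Om y -> Om y' -> norm2 (g y - g y') <= L * norm2 (y - y')) ->
  0 < L -> 0 < eta -> eta < 1 -> 0 < alpha -> alpha <= 1 -> 0 < beta ->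
  0 < theta -> theta < 1 -> Om xk -> Om zk -> 0 <= Dl g beta xk zk ->
  armijo f g eta xk (zk - xk) (theta ^+ i * alpha) ->
  (forall j, (j < i)%N -> ~ armijo f g eta xk (zk - xk) (theta ^+ j * alpha)) ->
  Dl g beta xk zk * (eta * Num.min alpha (theta * (1 - eta) / (beta * L)) / beta)
   <= f xk - f (xk + (theta ^+ i * alpha) *: (zk - xk)).
Proof.
move=> cO Hd Hl L0 e0 e1 a0 a1 b0 t0 t1 Ox Oz D0 arm hfail.
set c := Num.min alpha (theta * (1 - eta) / (beta * L)).
have c0 : 0 < c by rewrite lt_min a0 /= divr_gt0 ?mulr_gt0 ?subr_gt0.
rewrite Dl_eq in D0 *.
set d := zk - xk in D0 arm hfail *.
have dd0 := dot_ge0 d.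
set G := - dot (g xk) d.
have G0 : 0 <= G by rewrite /G; nra.
have hcG : c * G <= theta ^+ i * alpha * G.
  apply: ler_wpM2r => //.
  case: i arm hfail => [|j] arm hfail.
    by rewrite expr0 mul1r /c ge_min lexx.
  have nf := hfail j (ltnSn j).
  set a' := theta ^+ j * alpha in nf.
  have a'0 : 0 < a' by rewrite /a' mulr_gt0 ?exprn_gt0.
  have a'1 : a' <= 1.
    rewrite /a' -[1]mul1r; apply: ler_pM => //.
    - exact: exprn_ge0 (ltW t0).
    - exact: ltW.
    - exact: exprn_ile1 (ltW t0) (ltW t1).
  have Oy := conv_in Om xk zk a' cO Ox Oz (ltW a'0) a'1.
  have h := descent _ _ _ _ _ _ cO Hd Hl L0 Ox Oy.
  rewrite (_ : xk + a' *: (zk - xk) - xk = a' *: d) in h; last by rewrite addrC addKr.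
  rewrite !(dotZl, dotZr) in h.
  move/negP: nf; rewrite /armijo -ltNge -/d => nf.
  have hG : (1 - eta) * G < L * beta * a' * G.
    have : eta * a' * dot (g xk) d < a' * dot (g xk) d + L / 2 * (a' * (a' * dot d d)) by lra.
    move=> h1.
    have GE : G = - dot (g xk) d by [].
    have h2 : (1 - eta) * a' * G < L / 2 * (a' * (a' * dot d d)) by rewrite GE; lra.
    have h3 : dot d d <= 2 * beta * G by rewrite GE; lra.
    have h4 : L / 2 * (a' * (a' * dot d d)) <= L / 2 * (a' * (a' * (2 * beta * G))).
      apply: ler_wpM2l; first by apply: divr_ge0; [exact: ltW | ].
      by apply: ler_wpM2l; [exact: ltW | apply: ler_wpM2l; [exact: ltW|]].
    have h5 : a' * ((1 - eta) * G) < a' * (L * beta * a' * G).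
      have -> : a' * (L * beta * a' * G) = L / 2 * (a' * (a' * (2 * beta * G))).
        by field.
      lra.
    by rewrite ltr_pM2l in h5.
  have Gp : 0 < G.
    rewrite lt_neqAle G0 andbT; apply/negP => /eqP G00.
    by rewrite -G00 !mulr0 ltxx in hG.
  rewrite /c ge_min; apply/orP; right.
  have -> : theta ^+ j.+1 * alpha = theta * a' by rewrite exprS /a' mulrA.
  rewrite ler_pdivrMr ?mulr_gt0 // -mulrA ler_pM2l //.
  rewrite ltr_pM2r // in hG; lra.
move: arm; rewrite /armijo -/d => arm.
have GE : G = - dot (g xk) d by [].
have e1' : 0 < eta * c / beta by rewrite divr_gt0 ?mulr_gt0.
have hb : beta * (eta * c / beta) = eta * c by rewrite mulrC mulfVK ?gt_eqF.
have h1 : (- 2^-1 * dot d d - beta * dot (g xk) d) * (eta * c / beta) <= beta * G * (eta * c / beta).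
  by apply: ler_wpM2r; [exact: ltW | rewrite GE; lra].
rewrite [beta * G * _]mulrAC hb in h1.
have h2 := ler_wpM2l (ltW e0) hcG.
nra.
Qed.

End Aux.
Theorem theorem3p6 (R : realType) (n : nat) (Om : set 'rV[R]_n)
  (f : 'rV[R]_n -> R) (g : 'rV[R]_n -> 'rV[R]_n) (fbar L beta gamma : R)
  (eta alpha theta : R) (om : nat -> R) (x z u : nat -> 'rV[R]_n) :
  Om !=set0 -> closed Om -> convex_set Om ->
  (forall y, Om y -> differentiable f y /\ forall v, 'd f y v = dot (g y) v) ->
  (forall y, Om y -> fbar <= f y) ->
  0 < L ->
  (forall y y', Om y -> Om y' -> norm2 (g y - g y') <= L * norm2 (y - y')) ->
  (forall k, 0 <= om k) ->
  (\sum_(0 <= k <oo) (om k)%:E < +oo)%E ->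
  0 < gamma < 1 ->
  IGPM_noLS Om g L beta gamma om x z u \/
  IGPM_LS Om f g eta alpha beta theta gamma om x z u ->
  (fun k => Eres Om g beta (x k)) @ \oo --> 0.
Proof.
move=> O0 clO cO Hd Hfb L0 Hl om0 Hom /andP[g0 g1] Halg.
have Hip : forall k, inexact_proj Om g beta gamma (om k) (x k) (z k) (u k).
  by case: Halg => [[_ [_ Hk]] | [_ [_ [_ [_ [_ Hk]]]]]] k; case: (Hk k).
have [C [C0 [Hx [HD Hdec]]]] : exists C, 0 < C /\ (forall k, Om (x k)) /\
    (forall k, 0 <= Dl R n g beta (x k) (z k)) /\
    (forall k, Dl R n g beta (x k) (z k) * C <= f (x k) - f (x k.+1)).
  case: Halg => [[/andP[b0 bL] [Ox0 Hk]] | [/andP[e0 e1] [/andP[a0 a1] [b0 [/andP[t0 t1] [Ox0 Hk]]]]]].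
  - have Hx : forall k, Om (x k).
      by elim => // k IH; have [[Oz _] ->] := Hk k.
    have HD k : 0 <= Dl R n g beta (x k) (z k).
      exact: (step_bound _ _ _ _ _ _ _ _ _ _ O0 clO cO g0 (om0 k) (Hx k) (Hip k)).1.
    exists beta^-1; split; first by rewrite invr_gt0.
    split => //; split => // k.
    have [[Oz _] ->] := Hk k.
    exact: (dec_noLS _ _ _ _ _ _ _ _ _ cO Hd Hl L0 b0 bL (Hx k) Oz (HD k)).
  - have Hx : forall k, Om (x k).
      elim => // k IH; have [[Oz _] [i [_ [_ ->]]]] := Hk k.
      apply: conv_in => //.
        by rewrite mulr_ge0 ?exprn_ge0 ?ltW.
      rewrite -[1]mul1r; apply: ler_pM => //.
      - exact: exprn_ge0 (ltW t0).
      - exact: ltW.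
      - exact: exprn_ile1 (ltW t0) (ltW t1).
    have HD k : 0 <= Dl R n g beta (x k) (z k).
      exact: (step_bound _ _ _ _ _ _ _ _ _ _ O0 clO cO g0 (om0 k) (Hx k) (Hip k)).1.
    exists (eta * Num.min alpha (theta * (1 - eta) / (beta * L)) / beta); split.
      have cpos : 0 < Num.min alpha (theta * (1 - eta) / (beta * L)).
        by rewrite lt_min a0 /= divr_gt0 ?mulr_gt0 ?subr_gt0.
      by rewrite divr_gt0 // mulr_gt0.
    split => //; split => // k.
    have [[Oz _] [i [arm [hf ->]]]] := Hk k.
    exact: (dec_LS _ _ _ _ _ _ _ _ _ _ _ _ _ cO Hd Hl L0 e0 e1 a0 a1 b0 t0 t1 (Hx k) Oz (HD k) arm hf).
have HE k : Eres Om g beta (x k) <= 2 / gamma * (Dl R n g beta (x k) (z k) + om k).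
  exact: (step_bound _ _ _ _ _ _ _ _ _ _ O0 clO cO g0 (om0 k) (Hx k) (Hip k)).2.
have sumD N : \sum_(0 <= k < N) Dl R n g beta (x k) (z k) <= (f (x 0) - fbar) / C.
  rewrite ler_pdivlMr // mulr_suml.
  have : \sum_(0 <= k < N) Dl R n g beta (x k) (z k) * C <= f (x 0) - f (x N).
    elim: N => [|N IH]; first by rewrite big_geq // subrr.
    rewrite big_nat_recr //=; have := Hdec N; lra.
  have := Hfb _ (Hx N); lra.
have [s Hs] : exists s : R, forall N, \sum_(0 <= k < N) om k <= s.
  have ge N : (\sum_(0 <= k < N) (om k)%:E <= \sum_(0 <= k <oo) (om k)%:E)%E.
    by apply: nneseries_lim_ge => k _ _; rewrite lee_fin.
  move: Hom ge; case: (\sum_(0 <= k <oo) (om k)%:E)%E => [r| |] // _ ge.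
    by exists r => N; have := ge N; rewrite sumEFin lee_fin.
  by have := ge 0%N; rewrite big_geq.
have cD := tail0 _ _ _ HD sumD.
have cO' := tail0 _ _ _ om0 Hs.
apply: (squeeze_cvgr (f := fun=> 0) (h := fun k => 2 / gamma * (Dl R n g beta (x k) (z k) + om k))).
- apply: nearW => k; rewrite HE andbT /Eres; exact: sqr_ge0.
- exact: cvg_cst.
- rewrite [X in _ --> X](_ : 0 = 2 / gamma * (0 + 0)); last by rewrite addr0 mulr0.
  exact: cvgMl_tmp (cvgD cD cO').
Qed.
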